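(* Let $n>2$, $V=\mathbb{F}_2^n$, and let $g\in\mathrm{Sym}(V)$ be such that $T\neq T^g$. If $W\le V$ is the subspace with $\sigma_W=T\cap T^g$, then $\dim(W)\le n-2$.
   Context: $T=\{\sigma_v: v\in V\}\le\mathrm{Sym}(V)$ is the group of translations $\sigma_v:x\mapsto x+v$; for a subset $W\subseteq V$, $\sigma_W=\{\sigma_w:w\in W\}$. $T^g=g^{-1}Tg$. Permutations act on the right. *)

(* Defs.v *)
From HB Require Import structures.
From mathcomp Require Import all_boot all_order all_algebra all_fingroup all_field.
Set Implicit Arguments. Unset Strict Implicit. Unset Printing Implicit Defensive.
Import GRing.Theory.
Local Open Scope ring_scope.

Notation Vn n := ('rV['F_2]_n) (only parsing).

Definition transl (n : nat) (v : 'rV['F_2]_n) : {perm 'rV['F_2]_n} :=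
  perm (@addIr _ v).

Definition translS (n : nat) (W : pred 'rV['F_2]_n) : {set {perm 'rV['F_2]_n}} :=
  [set transl w | w in W].

Definition translT (n : nat) : {set {perm 'rV['F_2]_n}} :=
  translS (n := n) predT.

(* Main.v *)
Require Import Defs.
From HB Require Import structures.
From mathcomp Require Import all_boot all_order all_algebra all_fingroup all_field.
From mathcomp Require Import zify.
From Stdlib Require Import Lia.

Import GRing.Theory.

Section Aux.
Variable n : nat.
Local Notation V := ('rV['F_2]_n).

Lemma translE (v x : V) : transl v x = (x + v)%R.
Proof. by rewrite /transl permE. Qed.

Lemma translM (u v : V) : (transl u * transl v)%g = transl (u + v)%R.
Proof. by apply/permP => x; rewrite permM !translE addrA. Qed.

Lemma transl0 : transl (0 : V) = 1%g.
Proof. by apply/permP => x; rewrite translE perm1 addr0. Qed.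

Lemma F2_addK (a : 'F_2) : (a + a = 0)%R.
Proof. by case: a => [[|[|m]]] //= H; apply/val_inj. Qed.

Lemma translK (u : V) : (transl u * transl u)%g = 1%g.
Proof.
rewrite translM.
have -> : (u + u = 0)%R by apply/rowP => i; rewrite !mxE F2_addK.
by rewrite transl0.
Qed.

Lemma conjE (v : V) (g : {perm V}) x : ((transl v) ^ g)%g x = g (g^-1%g x + v)%R.
Proof. by rewrite conjgE !permM translE. Qed.

Lemma memTg (g k : {perm V}) : k \in (translT n :^ g)%g ->
  exists v, k = ((transl v) ^ g)%g.
Proof.
rewrite mem_conjg => /imsetP [v _ Hv]; exists v.
by rewrite -Hv conjgKV.
Qed.

Lemma fixTg (g : {perm V}) v x : ((transl v) ^ g)%g x = x -> v = 0%R.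
Proof.
rewrite conjE => H.
have : (g^-1%g (g (g^-1%g x + v)%R)) = g^-1%g x by rewrite H.
rewrite -permM mulgV perm1 => /eqP; rewrite -subr_eq0 addrC addKr.
by move/eqP.
Qed.
End Aux.

Lemma vaddK n (u : 'rV['F_2]_n) : (u + u = 0)%R.
Proof. by apply/rowP => i; rewrite !mxE F2_addK. Qed.

Lemma F2_cases (a : 'F_2) : a = 0%R \/ a = 1%R.
Proof.
case: a => [[|[|m]]] //= H; [left|right]; by apply/val_inj.
Qed.

Theorem mainTheorem4 (n : nat) (hn : (2 < n)%N) (g : {perm 'rV['F_2]_n})
  (hTg : translT n != (translT n :^ g)%g)
  (W : {vspace 'rV['F_2]_n})
  (hW : translS (mem W) = (translT n :&: (translT n :^ g))%g) :
  (\dim W <= n - 2)%N.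
Proof.
rewrite leqNgt; apply/negP => Hd.
have inWT : forall w, w \in W -> transl w \in (translT n :^ g)%g.
  move=> w Hw.
  have : transl w \in translS (mem W) by apply/imsetP; exists w.
  by rewrite hW => /setIP [].
have hsub : (translT n :^ g \subset translT n)%g.
  apply/subsetP => k Hk.
  have [v Hv] := @memTg _ _ _ Hk.
  set c := k 0%R.
  suff -> : k = transl c by apply/imsetP; exists c.
  have kk : (k * k = 1)%g by rewrite Hv -conjMg translK conj1g.
  have comm : forall w, w \in W -> (k * transl w = transl w * k)%g.
    move=> w Hw; have [u Hu] := @memTg _ _ _ (inWT w Hw).
    by rewrite Hv Hu -!conjMg !translM addrC.
  case: (boolP (c \in W)) => Hc.
    have [u Hu] := @memTg _ _ _ (inWT c Hc).
    have H0 : (k * transl c)%g 0%R = 0%R by rewrite permM translE vaddK.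
    have e : (v + u = 0)%R.
      by apply: (@fixTg n g _ 0%R); move: H0; rewrite Hv Hu -conjMg translM.
    have H1 : (k * transl c = 1)%g by rewrite Hv Hu -conjMg translM e transl0 conj1g.
    by apply: (mulIg (transl c)); rewrite H1 translK.
  have full : forall x, x \in W \/ (x + c)%R \in W.
    have lt : (\dim W < \dim (W + <[c]>))%N.
      rewrite (ltn_leqif (dimv_leqif_sup (addvSl W <[c]>))).
      apply/negP; rewrite subv_add => /andP [_ H].
      by move: Hc; rewrite memvE H.
    have le : (\dim (W + <[c]>) <= n)%N.
      have := dimvS (subvf (W + <[c]>)).
      by rewrite dimvf /dim /= mul1n.
    have hf : (W + <[c]>)%VS = fullv.
      apply/eqP; rewrite -(dimv_leqif_eq (subvf _)).
      rewrite dimvf /dim /= mul1n; apply/eqP.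
      apply/eqP; rewrite eqn_leq le /=.
      move: Hd lt; clear; move=> Hd lt; lia.
    move=> x; have : x \in (W + <[c]>)%VS by rewrite hf memvf.
    case/memv_addP => w Hw [y /vlineP [a ->] ->].
    case: (F2_cases a) => ->.
      by left; rewrite scale0r addr0.
    by right; rewrite scale1r -addrA vaddK addr0.
  apply/permP => x; rewrite translE.
  case: (full x) => Hx.
    have e1 : k x = (transl x * k)%g 0%R by rewrite permM translE add0r.
    by rewrite e1 -comm // permM translE addrC.
  have ex : x = transl (x + c)%R c by rewrite translE addrCA vaddK addr0.
  rewrite {1}ex -permM -comm // permM.
  have -> : k c = 0%R by rewrite /c -permM kk perm1.
  by rewrite translE add0r.
have : (translT n :^ g == translT n)%g by rewrite eqEcard hsub cardJg leqnn.
by rewrite eq_sym (negbTE hTg).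
Qed.
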